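(* Let $d \geq 3$, let $C \subset \mathbb{R}^d$ be a smooth $d$-dimensional combinatorial cube with faces labeled $F_I^J$ via a fixed face-poset isomorphism with $[0,1]^d$, and fix $x,y \in \{1,\dots,d\}$ with $x \neq y$. Consider the four $(d-2)$-dimensional faces $F_{xy}, F_{x\bar y}, F_{\bar x y}, F_{\bar x \bar y}$. If three of them are parallel to each other, then the fourth is parallel to them as well.
   Context: A lattice polytope is the convex hull of finitely many points of $\mathbb{Z}^d$. A $d$-dimensional polytope is simple if each vertex lies in exactly $d$ edges; the primitive edge directions at a vertex are the smallest lattice vectors along its incident edges; a $d$-dimensional lattice polytope in $\mathbb{R}^d$ is smooth if it is simple and at every vertex the primitive edge directions form a basis of $\mathbb{Z}^d$. A $d$-dimensional combinatorial cube is a polytope $C$ whose face poset is isomorphic to that of $[0,1]^d$. For disjoint $I,J \subseteq \{1,\dots,d\}$ the face of $[0,1]^d$ given by $x_k=0$ for $k\in I$ and $x_k = 1$ for $k \in J$ is denoted $F_I^J$, and the corresponding face of $C$ is also denoted $F_I^J$. Elements of $J$ are written with a bar and elements of $I$ without, e.g. $F_{x\bar y} = F_{\{x\}}^{\{y\}}$, $F_{\bar x\bar y} = F_{\emptyset}^{\{x,y\}}$. Two faces $F,G$ are parallel if $\mathrm{lin}(F)=\mathrm{lin}(G)$, where $\mathrm{lin}(F)$ is the linear subspace parallel to the affine hull of $F$. *)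

(* Defs.v *)
From HB Require Import structures.
From mathcomp Require Import all_boot all_order all_algebra.
From mathcomp Require Import boolp classical_sets reals.
Set Implicit Arguments. Unset Strict Implicit. Unset Printing Implicit Defensive.
Import Order.TTheory GRing.Theory Num.Theory.
Local Open Scope ring_scope.
Local Open Scope classical_set_scope.

Section Defs.
Variables (R : realType) (d : nat).
Notation vec := 'rV[R]_d.

Definition lattice (p : vec) : Prop := forall i, p 0 i \is a Num.int.

Definition dotv (c p : vec) : R := \sum_(i < d) c 0 i * p 0 i.

Definition conv (V : seq vec) : set vec :=
  [set p | exists w : 'I_(size V) -> R,
     (forall i, 0 <= w i) /\ \sum_i w i = 1 /\ p = \sum_i w i *: V`_i].

Definition lattice_polytope (P : set vec) : Prop :=
  exists V : seq vec, (forall v, v \in V -> lattice v) /\ P = conv V.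

(* faces: intersections with valid linear inequalities (includes the empty
   face and P itself) *)
Definition face (P F : set vec) : Prop :=
  exists (c : vec) (b : R), (forall p, P p -> dotv c p <= b) /\
    F = P `&` [set p | dotv c p = b].

(* lin(F): the linear subspace parallel to the affine hull of F *)
Definition lin (F : set vec) : set vec :=
  [set v | exists (n : nat) (a : 'I_n -> R) (p q : 'I_n -> vec),
     (forall i, F (p i) /\ F (q i)) /\ v = \sum_i a i *: (p i - q i)].

Definition parallel (F G : set vec) : Prop := lin F = lin G.

Definition full_dim (P : set vec) : Prop := lin P = setT.

Definition vertex (P : set vec) (v : vec) : Prop := face P [set v].

Definition edge (P E : set vec) : Prop :=
  face P E /\ exists u : vec, u != 0 /\ lin E = [set t *: u | t in [set: R]].

Definition edges_at (P : set vec) (v : vec) (E : 'I_d -> set vec) : Prop :=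
  injective E /\ (forall i, edge P (E i) /\ E i v) /\
  (forall F, edge P F -> F v -> exists i, F = E i).

Definition simple (P : set vec) : Prop :=
  forall v, vertex P v -> exists E, edges_at P v E.

Definition prim_dir (v : vec) (E : set vec) (u : vec) : Prop :=
  lattice u /\ u != 0 /\ (exists t : R, 0 < t /\ E (v + t *: u)) /\
  (forall s : R, 0 < s -> lattice (s *: u) -> 1 <= s).

Definition Zbasis (u : 'I_d -> vec) : Prop :=
  (forall z, lattice z <->
     exists a : 'I_d -> R, (forall i, a i \is a Num.int) /\ z = \sum_i a i *: u i) /\
  (forall a : 'I_d -> R, \sum_i a i *: u i = 0 -> forall i, a i = 0).

(* smooth (assumes P is a d-dimensional lattice polytope in R^d) *)
Definition smooth (P : set vec) : Prop :=
  simple P /\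
  forall v E, vertex P v -> edges_at P v E ->
    exists u : 'I_d -> vec, (forall i, prim_dir v (E i) (u i)) /\ Zbasis u.

Definition unit_cube : set vec := [set p | forall i, 0 <= p 0 i <= 1].

Definition face_iso (C : set vec) (phi : set vec -> set vec) : Prop :=
  (forall F, face unit_cube F -> face C (phi F)) /\
  (forall G, face C G -> exists2 F, face unit_cube F & G = phi F) /\
  (forall F G, face unit_cube F -> face unit_cube G ->
     (F `<=` G <-> phi F `<=` phi G)).

Definition cubeF (I J : {set 'I_d}) : set vec :=
  [set p | unit_cube p /\ (forall k, k \in I -> p 0 k = 0) /\
                          (forall k, k \in J -> p 0 k = 1)].

(* the four faces F_{xy}, F_{x ybar}, F_{xbar y}, F_{xbar ybar} of C,
   labelled through phi *)
Definition quad (phi : set vec -> set vec) (x y : 'I_d) : 'I_4 -> set vec :=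
  fun i => nth set0
    [:: phi (cubeF [set x; y] finset.set0); phi (cubeF [set x] [set y]);
        phi (cubeF [set y] [set x]); phi (cubeF finset.set0 [set x; y])] i.

End Defs.

(* Main.v *)
Require Import Defs.
From HB Require Import structures.
From mathcomp Require Import all_boot all_order all_algebra.
From mathcomp Require Import boolp classical_sets reals.
From mathcomp Require Import zify.
Set Implicit Arguments. Unset Strict Implicit. Unset Printing Implicit Defensive.
Import Order.TTheory GRing.Theory Num.Theory.
Local Open Scope ring_scope.
Local Open Scope classical_set_scope.

Section Aux.
Variables (R : realType) (d : nat).
Notation vec := 'rV[R]_d.

Lemma lin0 (F : set vec) : lin F 0.
Proof.
exists 0%N, (fun _ => 0), (fun _ => 0), (fun _ => 0).
split; first by case=> i; rewrite ltn0.
by rewrite big_ord0.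
Qed.

Lemma linD (F : set vec) u v : lin F u -> lin F v -> lin F (u + v).
Proof.
move=> [n1 [a1 [p1 [q1 [H1 ->]]]]] [n2 [a2 [p2 [q2 [H2 ->]]]]].
pose g (T : Type) (f1 : 'I_n1 -> T) (f2 : 'I_n2 -> T) (i : 'I_(n1 + n2)) :=
  match split i with inl j => f1 j | inr j => f2 j end.
exists (n1 + n2)%N, (g _ a1 a2), (g _ p1 p2), (g _ q1 q2); split.
  by move=> i; rewrite /g; case: (split i).
rewrite big_split_ord /=; congr (_ + _); apply: eq_bigr => i _;
  rewrite /g; [have -> : split (lshift n2 i) = inl i by exact: (unsplitK (inl _ i))
              | have -> : split (rshift n1 i) = inr i by exact: (unsplitK (inr _ i))]; by [].
Qed.

Lemma linZ (F : set vec) k u : lin F u -> lin F (k *: u).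
Proof.
move=> [n [a [p [q [H ->]]]]].
exists n, (fun i => k * a i), p, q; split => //.
by rewrite scaler_sumr; apply: eq_bigr => i _; rewrite scalerA.
Qed.

Lemma linB (F : set vec) f e : F f -> F e -> lin F (f - e).
Proof.
move=> Hf He; exists 1%N, (fun _ => 1), (fun _ => f), (fun _ => e); split => //.
by rewrite big_ord1 scale1r.
Qed.

Lemma linV (F : set vec) : exists U : {vspace vec}, forall v, lin F v <-> v \in U.
Proof.
have dimU (U : {vspace vec}) : (\dim U <= d)%N.
  by have := dimvS (subvf U); rewrite dimvf /dim /= mul1n.
suff key : forall n (U : {vspace vec}), (d - \dim U <= n)%N ->
   (forall v, v \in U -> lin F v) -> exists U' : {vspace vec}, forall v, lin F v <-> v \in U'.
  have := key d (0%VS : {vspace vec}) (leq_subr _ _); apply.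
  by move=> v; rewrite memv0 => /eqP ->; exact: lin0.
elim=> [|n IH] U hn hU.
- have [H|H] := pselect (forall v, lin F v -> v \in U).
    by exists U => v; split; [apply: H | apply: hU].
  move/existsNP: H => [v /not_implyP [Hv Hn]].
  have sub : (U <= U + <[v]>)%VS by apply: addvSl.
  have := dimv_leqif_eq sub => /leqifP.
  case: ifP => [/eqP E|_ lt].
    by case: Hn; rewrite E; apply: (subvP (addvSr _ _)); exact: memv_line.
  have := dimU (U + <[v]>)%VS; lia.
- have [H|H] := pselect (forall v, lin F v -> v \in U).
    by exists U => v; split; [apply: H | apply: hU].
  move/existsNP: H => [v /not_implyP [Hv Hn]].
  have sub : (U <= U + <[v]>)%VS by apply: addvSl.
  have := dimv_leqif_eq sub => /leqifP.
  case: ifP => [/eqP E|_ lt].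
    by case: Hn; rewrite E; apply: (subvP (addvSr _ _)); exact: memv_line.
  apply: (IH (U + <[v]>)%VS).
    have := dimU (U + <[v]>)%VS; lia.
  move=> w /memv_addP [u Hu [z /vlineP [k ->] ->]].
  by apply: linD; [apply: hU | apply: linZ].
Qed.

Definition Vs (F : set vec) : {vspace vec} := projT1 (cid (linV F)).

Lemma VsE F v : lin F v <-> v \in Vs F.
Proof. exact: (projT2 (cid (linV F)) v). Qed.

Lemma Vs_dim F : (\dim (Vs F) <= d)%N.
Proof. by have := dimvS (subvf (Vs F)); rewrite dimvf /dim /= mul1n. Qed.

Lemma lin_sub (F G : set vec) : F `<=` G -> (Vs F <= Vs G)%VS.
Proof.
move=> FG; apply/subvP => v /VsE [n [a [p [q [H ->]]]]]; apply/VsE.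
exists n, a, p, q; split => // i; have [] := H i; split; exact: FG.
Qed.

Lemma dotvD (c u v : vec) : dotv c (u + v) = dotv c u + dotv c v.
Proof. by rewrite /dotv -big_split; apply: eq_bigr => i _; rewrite mxE mulrDr. Qed.

Lemma dotvZ (c : vec) k (u : vec) : dotv c (k *: u) = k * dotv c u.
Proof. by rewrite /dotv mulr_sumr; apply: eq_bigr => i _; rewrite mxE mulrCA. Qed.

Lemma dotvN (c u : vec) : dotv c (- u) = - dotv c u.
Proof. by rewrite -scaleN1r dotvZ mulN1r. Qed.

Lemma dotv0 (c : vec) : dotv c 0 = 0.
Proof. by rewrite /dotv big1 // => i _; rewrite mxE mulr0. Qed.

Lemma dotv_sum (c : vec) n (f : 'I_n -> vec) : dotv c (\sum_i f i) = \sum_i dotv c (f i).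
Proof. exact: (big_morph (dotv c) (dotvD c) (dotv0 c)). Qed.

Lemma lin_face_sub (C F1 F2 : set vec) e :
  face C F2 -> F1 `<=` C -> F1 e -> F2 e -> (Vs F1 <= Vs F2)%VS -> F1 `<=` F2.
Proof.
move=> [c [b [Hle HF2]]] F1C He1 He2 sub f Hf.
have : lin F2 (f - e) by apply/VsE; apply: (subvP sub); apply/VsE; exact: linB.
move=> [n [a [p [q [H Hv]]]]].
have z : dotv c (f - e) = 0.
  rewrite Hv dotv_sum big1 // => i _.
  have [] := H i; rewrite HF2 => -[_ /= hp] [_ /= hq].
  by rewrite dotvZ dotvD dotvN hp hq subrr mulr0.
move: He2; rewrite HF2 => -[_ /= he].
split; first exact: F1C.
by move: z; rewrite /= dotvD dotvN he => /eqP; rewrite subr_eq0 => /eqP.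
Qed.

End Aux.
Section Cube.
Variables (R : realType) (d : nat).
Notation vec := 'rV[R]_d.

Definition pt (K : {set 'I_d}) : vec := \row_i (if i \in K then 1 else 0).

Definition disj (I J : {set 'I_d}) := forall k, k \in I -> k \notin J.

Lemma pt_in (I J K : {set 'I_d}) : disj I K -> J \subset K -> @cubeF R d I J (pt K).
Proof.
move=> dIK /fintype.subsetP JK; split; [|split].
- by move=> i; rewrite mxE; case: ifP => _; rewrite lexx ?ler01 ?ler01.
- by move=> k /dIK kK; rewrite mxE (negbTE kK).
- by move=> k /JK kK; rewrite mxE kK.
Qed.

Lemma pt_notin0 (I J K : {set 'I_d}) k : k \in I -> k \in K -> ~ @cubeF R d I J (pt K).
Proof.
by move=> kI kK [_ [H _]]; have := H k kI; rewrite mxE kK => /eqP; rewrite oner_eq0.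
Qed.

Lemma pt_notin1 (I J K : {set 'I_d}) k : k \in J -> k \notin K -> ~ @cubeF R d I J (pt K).
Proof.
by move=> kJ kK [_ [_ H]]; have := H k kJ; rewrite mxE (negbTE kK) => /eqP; rewrite eq_sym oner_eq0.
Qed.

Lemma cubeF_sub (I J I' J' : {set 'I_d}) :
  I' \subset I -> J' \subset J -> @cubeF R d I J `<=` @cubeF R d I' J'.
Proof.
move=> /fintype.subsetP sI /fintype.subsetP sJ p [Hc [H0 H1]]; split => //; split.
- by move=> k /sI; apply: H0.
- by move=> k /sJ; apply: H1.
Qed.

Lemma set0_face : face (@unit_cube R d) set0.
Proof.
exists 0, 1; split.
  by move=> p _; rewrite /dotv big1 ?ler01 // => i _; rewrite mxE mul0r.
apply/seteqP; split => p //= [_].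
by rewrite /dotv big1 => [/eqP|i _]; [rewrite eq_sym oner_eq0 | rewrite mxE mul0r].
Qed.

Lemma cubeF_face (I J : {set 'I_d}) : disj I J -> face (@unit_cube R d) (@cubeF R d I J).
Proof.
move=> dIJ.
pose c : vec := \row_k ((if k \in J then 1 else 0) - (if k \in I then 1 else 0)).
pose g (k : 'I_d) : R := if k \in J then 1 else 0.
have term : forall p : vec, unit_cube p -> forall k, c 0 k * p 0 k <= g k.
  move=> p Hp k; have /andP [h0 h1] := Hp k; rewrite /c /g mxE.
  case: ifP => kJ.
    have kI : k \in I = false by apply/negP => kI; move: (dIJ k kI); rewrite kJ.
    by rewrite kI subr0 mul1r.
  by case: ifP => _; rewrite ?subrr ?mul0r // sub0r mulN1r oppr_le0.
have ceq : forall p : vec, unit_cube p -> forall k,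
    (c 0 k * p 0 k = g k <-> ((k \in I -> p 0 k = 0) /\ (k \in J -> p 0 k = 1))).
  move=> p Hp k; rewrite /c /g mxE.
  case: ifP => kJ.
    have kI : k \in I = false by apply/negP => kI; move: (dIJ k kI); rewrite kJ.
    rewrite kI subr0 mul1r; split; [by move=> ->; split; rewrite ?kI | by move=> [_ h]; rewrite h].
  case: ifP => kI; rewrite ?subrr ?mul0r; last by split; split; rewrite ?kI ?kJ.
  rewrite sub0r mulN1r; split; last by move=> [h _]; rewrite h // oppr0.
  by move/eqP; rewrite oppr_eq0 => /eqP ->; split; rewrite ?kJ.
exists c, (\sum_k g k); split.
  by move=> p Hp; rewrite /dotv; apply: ler_sum => k _; apply: term.
apply/seteqP; split => p.
- move=> [Hp [H0 H1]]; split => //=; rewrite /dotv; apply: eq_bigr => k _.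
  by apply/(ceq p Hp); split; [apply: H0 | apply: H1].
- move=> [Hp /= Hs]; split => //.
  have Z : \sum_k (g k - c 0 k * p 0 k) = 0 by rewrite sumrB -[X in _ - X]/(dotv c p) Hs subrr.
  have E k : c 0 k * p 0 k = g k.
    apply/eqP; rewrite eq_sym -subr_eq0; apply/eqP.
    by apply: (psumr_eq0P _ Z) => // i _; rewrite subr_ge0; apply: term.
  by split => k kk; have [h0 h1] := (ceq p Hp k).1 (E k); [apply: h0 | apply: h1].
Qed.

End Cube.
Section Phi.
Variables (R : realType) (d : nat) (C : set 'rV[R]_d) (phi : set 'rV[R]_d -> set 'rV[R]_d).
Notation vec := 'rV[R]_d.
Hypothesis iso : face_iso C phi.

Lemma face_subC (F : set vec) : face C F -> F `<=` C.
Proof. by move=> [c [b [_ ->]]] p []. Qed.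

Lemma phi_sub (F G : set vec) : face (@unit_cube R d) F -> face (@unit_cube R d) G -> F `<=` G -> phi F `<=` phi G.
Proof. by case: iso => _ [_ H] fF fG; move/(H F G fF fG). Qed.

Lemma phi_subr (F G : set vec) : face (@unit_cube R d) F -> face (@unit_cube R d) G -> phi F `<=` phi G -> F `<=` G.
Proof. by case: iso => _ [_ H] fF fG; move/(H F G fF fG). Qed.

Lemma phi_face (F : set vec) : face (@unit_cube R d) F -> face C (phi F).
Proof. by case: iso => H _; apply: H. Qed.

Lemma phi_ne (F : set vec) p : face (@unit_cube R d) F -> F p -> exists q, phi F q.
Proof.
move=> fF Fp; apply/not_existsP => H.
have : phi F `<=` phi set0 by move=> q Hq; case: (H q).
by move/(phi_subr fF (@set0_face R d)) => /(_ p Fp).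
Qed.

Lemma phi_strict (F G : set vec) p q : face (@unit_cube R d) F -> face (@unit_cube R d) G -> F `<=` G ->
  F p -> G q -> ~ F q -> (\dim (Vs (phi F)) < \dim (Vs (phi G)))%N.
Proof.
move=> fF fG FG Fp Gq nFq.
have [e He] := phi_ne fF Fp.
have sub := lin_sub (phi_sub fF fG FG).
have := dimv_leqif_eq sub => /leqifP.
case: ifP => [/eqP E|_ //].
have : phi G `<=` phi F.
  apply: (lin_face_sub (C := C) (e := e)) => //.
  - exact: phi_face.
  - exact: face_subC (phi_face fG).
  - exact: phi_sub fF fG FG e He.
  - by rewrite E.
by move/(phi_subr fG fF) => /(_ q Gq).
Qed.

Lemma lower_bound n (I J : {set 'I_d}) : disj I J -> #|~: (I :|: J)| = n ->
  (n <= \dim (Vs (phi (cubeF I J))))%N.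
Proof.
elim: n I J => [//|n IH] I J dIJ cn.
have : (0 < #|~: (I :|: J)|)%N by rewrite cn.
case/card_gt0P => k; rewrite !inE negb_or => /andP [kI kJ].
have d' : disj (k |: I) J.
  by move=> z; rewrite !inE => /orP [/eqP -> //|/dIJ].
have cn' : #|~: ((k |: I) :|: J)| = n.
  have -> : ~: ((k |: I) :|: J) = (~: (I :|: J)) :\ k.
    by apply/setP => z; rewrite !inE !negb_or andbA.
  by move: cn; rewrite (cardsD1 k) !inE negb_or kI kJ /= => -[].
have := IH _ _ d' cn'.
move=> h; apply: (leq_ltn_trans h); apply: (phi_strict (p := pt R J) (q := pt R (k |: J))).
- exact: cubeF_face.
- exact: cubeF_face.
- by apply: cubeF_sub; [apply: finset.subsetUr | apply: subxx].
- by apply: pt_in => // z /d'.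
- apply: pt_in; last by apply: finset.subsetUr.
  by move=> z zI; rewrite !inE negb_or (dIJ z zI) andbT; apply: contraNneq kI => <-.
- by apply: (pt_notin0 (k := k)); rewrite !inE eqxx.
Qed.

Lemma facet_bound (I J : {set 'I_d}) k : disj I J -> (k \in I) || (k \in J) ->
  (\dim (Vs (phi (cubeF I J))) < d)%N.
Proof.
move=> dIJ kIJ.
have d0 : disj (finset.set0 : {set 'I_d}) finset.set0 by move=> z; rewrite inE.
apply: (leq_trans _ (Vs_dim (phi (@cubeF R d finset.set0 finset.set0)))).
case/orP: kIJ => kk.
- apply: (phi_strict (p := pt R J) (q := pt R (k |: J))).
  + exact: cubeF_face.
  + exact: cubeF_face.
  + by apply: cubeF_sub; apply: finset.sub0set.
  + by apply: pt_in => // z /dIJ.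
  + by apply: pt_in => [z|]; rewrite ?inE ?finset.sub0set.
  + by apply: (pt_notin0 (k := k)) => //; rewrite !inE eqxx.
- apply: (phi_strict (p := pt R J) (q := pt R finset.set0)).
  + exact: cubeF_face.
  + exact: cubeF_face.
  + by apply: cubeF_sub; apply: finset.sub0set.
  + by apply: pt_in => // z /dIJ.
  + by apply: pt_in => [z|]; rewrite ?inE ?finset.sub0set.
  + by apply: (pt_notin1 (k := k)) => //; rewrite !inE.
Qed.

Lemma core (E A1 A2 F1 F2 : set vec) m e :
  face (@unit_cube R d) E -> face (@unit_cube R d) A1 -> face (@unit_cube R d) A2 ->
  face (@unit_cube R d) F1 -> face (@unit_cube R d) F2 ->
  E `<=` F1 -> A1 `<=` F1 -> E `<=` F2 -> A2 `<=` F2 -> ~ (F1 `<=` F2) -> E e ->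
  (m <= \dim (Vs (phi A1)))%N -> (m <= \dim (Vs (phi E)))%N ->
  (\dim (Vs (phi F1)) <= m.+1)%N -> (\dim (Vs (phi F2)) <= m.+1)%N ->
  Vs (phi A1) = Vs (phi A2) -> Vs (phi E) = Vs (phi A1).
Proof.
move=> fE fA1 fA2 fF1 fF2 EF1 AF1 EF2 AF2 nF Ee hA hE hF1 hF2 WA.
have [//|ne] := eqVneq (Vs (phi E)) (Vs (phi A1)).
exfalso.
set W := Vs (phi A1) in ne WA hA *.
set Ssp := (Vs (phi E) + W)%VS.
have dS : (m.+1 <= \dim Ssp)%N.
  have s1 : (Vs (phi E) <= Ssp)%VS by apply: addvSl.
  have s2 : (W <= Ssp)%VS by apply: addvSr.
  have := dimv_leqif_eq s1 => /leqifP; case: ifP => [/eqP ES|_ lt]; last first.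
    lia.
  have := dimv_leqif_eq s2 => /leqifP; case: ifP => [/eqP WS|_ lt].
    by case/eqP: ne; rewrite ES WS.
  by move: lt; rewrite -ES => lt; lia.
have SF (F A : set vec) : face (@unit_cube R d) F -> face (@unit_cube R d) A -> E `<=` F -> A `<=` F ->
    Vs (phi A) = W -> (\dim (Vs (phi F)) <= m.+1)%N -> Ssp = Vs (phi F).
  move=> fF fA EF AF WA' hF.
  have sub : (Ssp <= Vs (phi F))%VS.
    rewrite subv_add; apply/andP; split; first exact: lin_sub (phi_sub fE fF EF).
    by rewrite -WA'; exact: lin_sub (phi_sub fA fF AF).
  by apply/eqP; rewrite eqEdim sub /=; apply: leq_trans hF dS.
have E1 := SF _ _ fF1 fA1 EF1 AF1 erefl hF1.
have E2 := SF _ _ fF2 fA2 EF2 AF2 (esym WA) hF2.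
have [e' He'] := phi_ne fE Ee.
apply: nF; apply: (phi_subr fF1 fF2).
apply: (lin_face_sub (C := C) (e := e')).
- exact: phi_face.
- exact: face_subC (phi_face fF1).
- exact: phi_sub fE fF1 EF1 e' He'.
- exact: phi_sub fE fF2 EF2 e' He'.
- by rewrite -E1 -E2.
Qed.

End Phi.
Lemma par_Vs (R : realType) (d : nat) (A B : set 'rV[R]_d) : parallel A B -> Vs A = Vs B.
Proof.
move=> P; apply/vspaceP => v; apply/idP/idP => /VsE H; apply/VsE; by [rewrite -P | rewrite P].
Qed.

Lemma Vs_par (R : realType) (d : nat) (A B : set 'rV[R]_d) : Vs A = Vs B -> parallel A B.
Proof.
move=> P; apply/seteqP; split => v /VsE H; apply/VsE; by [rewrite -P | rewrite P].
Qed.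

Lemma quad_lb (R : realType) (d : nat) (C : set 'rV[R]_d) phi (x y : 'I_d) (I J : {set 'I_d}) :
  face_iso C phi -> x != y -> disj I J -> I :|: J = [set x; y]%SET ->
  (d - 2 <= \dim (Vs (phi (@cubeF R d I J))))%N.
Proof.
move=> iso nxy dIJ UIJ; apply: (lower_bound iso dIJ); rewrite UIJ.
have := cardsC [set x; y]%SET; rewrite cards2 nxy card_ord /=; move: (#|~: _|) => n; lia.
Qed.

Ltac subt := apply: cubeF_sub; apply/fintype.subsetP => z;
  rewrite !inE //; move=> /eqP ->; rewrite ?eqxx ?orbT.

Theorem corollary3p4 (R : realType) (d : nat) (C : set 'rV[R]_d)
    (phi : set 'rV[R]_d -> set 'rV[R]_d) (x y : 'I_d) :
  (3 <= d)%N ->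
  lattice_polytope C -> full_dim C -> smooth C -> face_iso C phi ->
  x != y ->
  forall i : 'I_4,
    (forall j k : 'I_4, j != i -> k != i -> parallel (quad phi x y j) (quad phi x y k)) ->
    forall j : 'I_4, parallel (quad phi x y i) (quad phi x y j).
Proof.
move=> d3 _ _ _ iso nxy i Hp j.
have [->|nji] := eqVneq j i; first by [].
have fin : forall a, a != i -> Vs (quad phi x y i) = Vs (quad phi x y a) ->
    parallel (quad phi x y i) (quad phi x y j).
  move=> a ai E; apply: Vs_par; rewrite E; apply: par_Vs; exact: Hp.
have yx : y != x by rewrite eq_sym.
have dxy : disj [set x]%SET [set y]%SET by move=> z; rewrite !inE => /eqP ->.
have dyx : disj [set y]%SET [set x]%SET by move=> z; rewrite !inE => /eqP ->.
have dxy0 : disj [set x; y]%SET finset.set0 by move=> z; rewrite !inE.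
have d0xy : disj finset.set0 [set x; y]%SET by move=> z; rewrite !inE.
have dx0 : disj [set x]%SET finset.set0 by move=> z; rewrite !inE.
have dy0 : disj [set y]%SET finset.set0 by move=> z; rewrite !inE.
have d0x : disj finset.set0 [set x]%SET by move=> z; rewrite !inE.
have d0y : disj finset.set0 [set y]%SET by move=> z; rewrite !inE.
have U0 : [set x; y]%SET :|: finset.set0 = [set x; y]%SET by rewrite finset.setU0.
have U1 : [set x]%SET :|: [set y]%SET = [set x; y]%SET by [].
have U2 : [set y]%SET :|: [set x]%SET = [set x; y]%SET by rewrite finset.setUC.
have U3 : finset.set0 :|: [set x; y]%SET = [set x; y]%SET by rewrite finset.set0U.
have fb : forall I J k, disj I J -> (k \in I) || (k \in J) ->
    (\dim (Vs (phi (@cubeF R d I J))) <= (d - 2).+1)%N.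
  move=> I J k dIJ kk; have := facet_bound iso dIJ kk; lia.
have xx : x \in [set x]%SET by rewrite inE.
have yy : y \in [set y]%SET by rewrite inE.
have lb : forall I J, disj I J -> I :|: J = [set x; y]%SET ->
    (d - 2 <= \dim (Vs (phi (@cubeF R d I J))))%N.
  by move=> I J; apply: quad_lb iso nxy.
have ne : forall I J, disj I J -> @cubeF R d I J (pt R J).
  by move=> I J dIJ; apply: pt_in => //; apply: subxx.
case: i Hp nji fin => [[|[|[|[|//]]]] Hi] Hp nji fin.
- apply: (fin (@Ordinal 4 1 isT)) => //.
  rewrite /quad /=.
  apply: (core iso (e := pt R finset.set0) (m := d - 2)
    (A2 := @cubeF R d [set y]%SET [set x]%SET) (F1 := @cubeF R d [set x]%SET finset.set0)
    (F2 := @cubeF R d [set y]%SET finset.set0)).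
  all: try (apply: cubeF_face; assumption).
  all: try (subt; done).
  + move=> H; have := H _ (@pt_in R d [set x]%SET finset.set0 [set y]%SET dxy (finset.sub0set _)); apply: (pt_notin0 (k := y)) => //.
  + exact: ne.
  + exact: lb.
  + exact: lb.
  + by apply: (fb _ _ x) => //; rewrite xx.
  + by apply: (fb _ _ y) => //; rewrite yy.
  + have := Hp (@Ordinal 4 1 isT) (@Ordinal 4 2 isT) isT isT; rewrite /quad /=.
    exact: par_Vs.
- apply: (fin (@Ordinal 4 0 isT)) => //.
  rewrite /quad /=.
  apply: (core iso (e := pt R [set y]%SET) (m := d - 2)
    (A2 := @cubeF R d finset.set0 [set x; y]%SET) (F1 := @cubeF R d [set x]%SET finset.set0)
    (F2 := @cubeF R d finset.set0 [set y]%SET)).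
  all: try (apply: cubeF_face; assumption).
  all: try (subt; done).
  + move=> H; have := H _ (ne _ _ dx0); apply: (pt_notin1 (k := y)) => //; by rewrite inE.
  + exact: ne.
  + exact: lb.
  + exact: lb.
  + by apply: (fb _ _ x) => //; rewrite xx.
  + by apply: (fb _ _ y) => //; rewrite yy orbT.
  + have := Hp (@Ordinal 4 0 isT) (@Ordinal 4 3 isT) isT isT; rewrite /quad /=.
    exact: par_Vs.
- apply: (fin (@Ordinal 4 0 isT)) => //.
  rewrite /quad /=.
  apply: (core iso (e := pt R [set x]%SET) (m := d - 2)
    (A2 := @cubeF R d finset.set0 [set x; y]%SET) (F1 := @cubeF R d [set y]%SET finset.set0)
    (F2 := @cubeF R d finset.set0 [set x]%SET)).
  all: try (apply: cubeF_face; assumption).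
  all: try (subt; done).
  + move=> H; have := H _ (ne _ _ dy0); apply: (pt_notin1 (k := x)) => //; by rewrite inE.
  + exact: ne.
  + exact: lb.
  + exact: lb.
  + by apply: (fb _ _ y) => //; rewrite yy.
  + by apply: (fb _ _ x) => //; rewrite xx orbT.
  + have := Hp (@Ordinal 4 0 isT) (@Ordinal 4 3 isT) isT isT; rewrite /quad /=.
    exact: par_Vs.
- apply: (fin (@Ordinal 4 2 isT)) => //.
  rewrite /quad /=.
  apply: (core iso (e := pt R [set x; y]%SET) (m := d - 2)
    (A2 := @cubeF R d [set x]%SET [set y]%SET) (F1 := @cubeF R d finset.set0 [set x]%SET)
    (F2 := @cubeF R d finset.set0 [set y]%SET)).
  all: try (apply: cubeF_face; assumption).
  all: try (subt; done).
  + move=> H; have := H _ (ne _ _ d0x); apply: (pt_notin1 (k := y)) => //; by rewrite inE.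
  + exact: ne.
  + exact: lb.
  + exact: lb.
  + by apply: (fb _ _ x) => //; rewrite xx orbT.
  + by apply: (fb _ _ y) => //; rewrite yy orbT.
  + have := Hp (@Ordinal 4 2 isT) (@Ordinal 4 1 isT) isT isT; rewrite /quad /=.
    exact: par_Vs.
Qed.
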